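(* Let $T>0$ and let $\theta:[0,T]\to[0,+\infty)$ be a continuous non-increasing function such that, for some integer $m\ge1$ and some constant $c>0$, $\theta^{2m-1}(t_1)\big(\theta(t_2)-\theta(t_1)\big)\le -c(t_2-t_1)\theta^{2m}(t_2)$ for all $0\le t_1\le t_2\le T$. Then $\theta(t)\le e^{-ct}\theta(0)$ for all $t\in[0,T]$. *)

(* Defs.v *)
From Stdlib Require Import Reals.
Open Scope R_scope.

(* theta : [0,T] -> R is modelled as a total function R -> R of which only the
   values on [0,T] matter. Continuity on [0,T] is continuity relative to [0,T]. *)
Definition in_interval (T t : R) : Prop := 0 <= t <= T.

Definition continuous_on_0T (T : R) (f : R -> R) : Prop :=
  forall t, in_interval T t -> limit1_in f (in_interval T) (f t) t.

(* Main.v *)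
Require Import Defs.
From Stdlib Require Import Reals Lra Lia Classical.
Open Scope R_scope.

Lemma bern (eta : R) (n : nat) : 0 <= eta <= 1 -> 1 - INR n * eta <= (1 - eta) ^ n.
Proof.
  intros He. induction n as [|n IH]; [simpl; lra|].
  rewrite S_INR. change ((1-eta)^(S n)) with ((1-eta)*(1-eta)^n).
  assert (0 <= INR n) by apply pos_INR.
  assert (0 <= 1 - eta) by lra.
  assert ((1 - eta) * (1 - INR n * eta) <= (1 - eta) * (1 - eta) ^ n)
    by (apply Rmult_le_compat_l; lra).
  nra.
Qed.

Lemma step (a b E k h : R) : a <= b * (1 - k * h) -> 0 <= b -> b <= E ->
  a <= E * exp (- (k * h)).
Proof.
  intros H1 H2 H3.
  assert (He := exp_ineq1_le (- (k * h))).
  assert (0 <= E) by lra.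
  destruct (Rle_or_lt 0 (1 - k * h)).
  - assert (b * (1 - k*h) <= E * (1 - k*h)) by (apply Rmult_le_compat_r; lra).
    assert (E * (1 - k*h) <= E * exp (- (k*h))) by (apply Rmult_le_compat_l; lra).
    lra.
  - assert (b * (1 - k*h) <= 0) by nra.
    assert (0 <= E * exp (- (k*h))) by (pose proof (exp_pos (-(k*h))); nra).
    lra.
Qed.

Section Main.
Variables (T : R) (theta : R -> R) (m : nat) (c : R).
Hypotheses (HT : 0 < T) (Hc : continuous_on_0T T theta)
  (Hpos : forall t, in_interval T t -> 0 <= theta t)
  (Hmon : forall t1 t2, 0 <= t1 -> t1 <= t2 -> t2 <= T -> theta t2 <= theta t1)
  (Hm : (1 <= m)%nat) (Hc0 : 0 < c)
  (Hineq : forall t1 t2, 0 <= t1 -> t1 <= t2 -> t2 <= T ->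
     theta t1 ^ (2 * m - 1) * (theta t2 - theta t1)
       <= - c * (t2 - t1) * theta t2 ^ (2 * m)).

Lemma local (k eta t sg : R) : 0 < k -> 0 < eta < 1 -> k <= c * (1 - eta) ^ (2 * m) ->
  t <= T -> 0 <= sg <= t -> 0 < theta sg ->
  exists d, 0 < d /\ forall u v, 0 <= u -> u <= v -> v <= t ->
    Rabs (u - sg) < d -> Rabs (v - sg) < d ->
    theta v <= theta u * (1 - k * (v - u)).
Proof.
  intros Hk Heta Hkc Ht Hsg Hth.
  set (eps := eta * theta sg / 2).
  assert (Heps : eps > 0) by (unfold eps; nra).
  destruct (Hc sg ltac:(unfold in_interval; lra) eps Heps) as [d [Hd Hcont]].
  exists d. split; [lra|].
  intros u v Hu Huv Hv Hud Hvd.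
  assert (Cu := Hcont u ltac:(split; [unfold in_interval; lra| exact Hud])).
  assert (Cv := Hcont v ltac:(split; [unfold in_interval; lra| exact Hvd])).
  simpl in Cu, Cv. unfold Rdist in Cu, Cv.
  apply Rabs_def2 in Cu. apply Rabs_def2 in Cv.
  assert (Hv0 : 0 < theta v) by (unfold eps in *; nra).
  assert (Hvu : theta v <= theta u) by (apply Hmon; lra).
  assert (Hle : (1 - eta) * theta u <= theta v) by (unfold eps in *; nra).
  assert (Hp : ((1 - eta) * theta u) ^ (2 * m) <= theta v ^ (2 * m))
    by (apply pow_incr; split; [nra|lra]).
  rewrite Rpow_mult_distr in Hp.
  assert (Hu0 : 0 < theta u) by lra.
  assert (P1 := pow_lt (theta u) (2 * m) Hu0).
  assert (P2 := pow_lt (theta u) (2 * m - 1) Hu0).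
  assert (Hsplit : theta u ^ (2 * m) = theta u ^ (2 * m - 1) * theta u).
  { replace (2 * m)%nat with (S (2 * m - 1)) at 1 by lia. simpl; ring. }
  assert (H1 : k * theta u ^ (2 * m) <= c * theta v ^ (2 * m)).
  { assert (0 <= (1-eta)^(2*m)) by (apply pow_le; lra). nra. }
  assert (H2 := Hineq u v Hu Huv ltac:(lra)).
  assert (H3 : theta u ^ (2 * m - 1) * (theta v - theta u)
     <= theta u ^ (2 * m - 1) * (- k * (v - u) * theta u)).
  { assert (0 <= v - u) by lra. rewrite Hsplit in H1. nra. }
  apply Rmult_le_reg_l in H3; [|exact P2]. nra.
Qed.

Lemma mainlem (k eta t : R) : 0 < k -> 0 < eta < 1 -> k <= c * (1 - eta) ^ (2 * m) ->
  0 <= t <= T -> 0 < theta t -> theta t <= exp (- k * t) * theta 0.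
Proof.
  intros Hk Heta Hkc Ht Htt.
  set (P := fun s => forall u, 0 <= u <= s -> theta u <= exp (- k * u) * theta 0).
  set (A := fun s => 0 <= s <= t /\ P s).
  assert (P0 : P 0).
  { intros u Hu. replace u with 0 by lra. replace (-k*0) with 0 by ring.
    rewrite exp_0. lra. }
  assert (Pdown : forall s s', s' <= s -> P s -> P s').
  { intros s s' H Ps u Hu. apply Ps. lra. }
  destruct (completeness A) as [sg [Hub Hlub]].
  { exists t. intros x [Hx _]. lra. }
  { exists 0. split; [lra|exact P0]. }
  assert (Hsg0 : 0 <= sg) by (apply Hub; split; [lra|exact P0]).
  assert (Hsgt : sg <= t) by (apply Hlub; intros x [Hx _]; lra).
  assert (Hthsg : 0 < theta sg).
  { assert (theta t <= theta sg) by (apply Hmon; lra). lra. }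
  destruct (local k eta t sg Hk Heta Hkc ltac:(lra) ltac:(lra) Hthsg) as [d [Hd Hloc]].
  assert (Hth0 : 0 <= theta 0) by (apply Hpos; unfold in_interval; lra).
  assert (Ext : forall a b, 0 <= a -> a <= b -> b <= t -> Rabs (a - sg) < d ->
      Rabs (b - sg) < d -> P a -> P b).
  { intros a b Ha Hab Hb Had Hbd Pa u Hu.
    destruct (Rle_or_lt u a) as [Hua|Hua]; [apply Pa; lra|].
    assert (Hl := Hloc a u Ha ltac:(lra) ltac:(lra) Had
                   ltac:(apply Rabs_def1; apply Rabs_def2 in Had; apply Rabs_def2 in Hbd; lra)).
    assert (Hs := step (theta u) (theta a) (exp (- k * a) * theta 0) k (u - a) Hl
       ltac:(apply Hpos; unfold in_interval; lra) ltac:(apply Pa; lra)).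
    replace (- k * u) with (- k * a + - (k * (u - a))) by ring.
    rewrite exp_plus. lra. }
  set (u0 := Rmax 0 (sg - d / 2)).
  assert (Pu0 : P u0).
  { destruct (Rle_or_lt sg u0) as [H|H].
    - assert (sg = 0).
      { unfold u0 in H. destruct (Rmax_Rle 0 (sg - d/2) sg) as [H1 _].
        destruct (H1 H); lra. }
      apply (Pdown 0); [unfold u0 in *; apply Rmax_lub; lra | exact P0].
    - destruct (Rle_or_lt sg u0) as [H'|H']; [lra|].
      assert (~ is_upper_bound A u0) by (intro Hc'; specialize (Hlub u0 Hc'); lra).
      apply not_all_ex_not in H0. destruct H0 as [x Hx].
      apply Classical_Prop.imply_to_and in Hx. destruct Hx as [[Hx1 Px] Hx2].
      apply (Pdown x); [lra|exact Px]. }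
  assert (Hu0a : sg - d / 2 <= u0) by apply Rmax_r.
  assert (Hu0b : 0 <= u0) by apply Rmax_l.
  assert (Hu0c : u0 <= sg).
  { unfold u0. apply Rmax_lub; lra. }
  assert (Psg : P sg).
  { apply (Ext u0 sg); try lra.
    - apply Rabs_def1; lra.
    - rewrite Rminus_diag, Rabs_R0; lra.
    - exact Pu0. }
  assert (Heq : sg = t).
  { destruct (Rle_or_lt t sg) as [H|H]; [lra|].
    set (s := Rmin t (sg + d / 2)).
    assert (Hs1 : s <= t) by apply Rmin_l.
    assert (Hs2 : s <= sg + d/2) by apply Rmin_r.
    assert (Hs3 : sg < s) by (unfold s; apply Rmin_glb_lt; lra).
    assert (Ps : P s).
    { apply (Ext sg s); try lra.
      - rewrite Rminus_diag, Rabs_R0; lra.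
      - apply Rabs_def1; lra.
      - exact Psg. }
    assert (s <= sg) by (apply Hub; split; [lra|exact Ps]). lra. }
  apply Psg. lra.
Qed.

End Main.

Theorem lemma8p2 (T : R) (theta : R -> R) (m : nat) (c : R) :
  0 < T ->
  continuous_on_0T T theta ->
  (forall t, in_interval T t -> 0 <= theta t) ->
  (forall t1 t2, 0 <= t1 -> t1 <= t2 -> t2 <= T -> theta t2 <= theta t1) ->
  (1 <= m)%nat ->
  0 < c ->
  (forall t1 t2, 0 <= t1 -> t1 <= t2 -> t2 <= T ->
     theta t1 ^ (2 * m - 1) * (theta t2 - theta t1)
       <= - c * (t2 - t1) * theta t2 ^ (2 * m)) ->
  forall t, in_interval T t -> theta t <= exp (- c * t) * theta 0.
Proof.
  intros HT Hc Hpos Hmon Hm Hc0 Hineq t Ht. unfold in_interval in Ht.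
  assert (Hth0 : 0 <= theta 0) by (apply Hpos; unfold in_interval; lra).
  assert (Htt0 : 0 <= theta t) by (apply Hpos; unfold in_interval; lra).
  assert (Hmt : theta t <= theta 0) by (apply Hmon; lra).
  pose proof (exp_pos (- c * t)) as Hexp.
  destruct (Req_dec (theta t) 0) as [Z|NZ].
  { rewrite Z. nra. }
  assert (Htp : 0 < theta t) by lra.
  apply Rnot_lt_le. intro Hcontra.
  set (a := theta t) in *. set (b := exp (- c * t) * theta 0) in *.
  assert (Htpos : 0 < t).
  { destruct (Req_dec t 0) as [E|E]; [|lra].
    unfold b in Hcontra. rewrite E in Hcontra. replace (-c*0) with 0 in Hcontra by ring.
    rewrite exp_0 in Hcontra. lra. }
  assert (Hb : 0 < b) by (unfold b; nra).
  set (dl := Rmin ((1 - b / a) / 2) (c * t / 2)).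
  assert (Hba : b / a < 1).
  { apply (Rmult_lt_reg_r a); [lra|]. unfold Rdiv. rewrite Rmult_assoc, Rinv_l; lra. }
  assert (Hdl1 : dl <= (1 - b/a)/2) by apply Rmin_l.
  assert (Hdl2 : dl <= c * t / 2) by apply Rmin_r.
  assert (Hdl0 : 0 < dl) by (unfold dl; apply Rmin_glb_lt; [lra|nra]).
  assert (Hba0 : 0 < b / a) by (apply Rdiv_lt_0_compat; lra).
  set (k := c - dl / t).
  assert (Hk : c / 2 <= k).
  { unfold k. assert (dl / t <= c / 2).
    { apply (Rmult_le_reg_r t); [lra|]. unfold Rdiv. rewrite Rmult_assoc, Rinv_l; lra. }
    lra. }
  assert (HmR : 1 <= INR m) by (apply (le_INR 1); lia).
  set (eta := dl / (2 * INR m * c * t)).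
  assert (Hden : 0 < 2 * INR m * c * t) by nra.
  assert (Heta_eq : eta * (2 * INR m * c * t) = dl)
    by (unfold eta; field; lra).
  assert (Heta0 : 0 < eta) by (unfold eta; apply Rdiv_lt_0_compat; lra).
  assert (Heta1 : eta < 1) by nra.
  assert (Hkc : k <= c * (1 - eta) ^ (2 * m)).
  { pose proof (bern eta (2 * m) ltac:(lra)) as B.
    rewrite mult_INR in B. simpl INR in B.
    assert (k = c * (1 - 2 * INR m * eta)).
    { unfold k. apply (Rmult_eq_reg_r t); [|lra].
      unfold Rdiv. field_simplify; [|lra]. nra. }
    replace (INR 2) with 2 in B by (simpl; ring). nra. }
  assert (Hmain : a <= exp (- k * t) * theta 0).
  { apply (mainlem T theta m c HT Hc Hpos Hmon Hm Hc0 Hineq k eta t); try exact Htp; lra. }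
  replace (- k * t) with (- c * t + dl) in Hmain
    by (unfold k; field; lra).
  rewrite exp_plus in Hmain.
  assert (He : 1 - dl <= exp (- dl)) by (pose proof (exp_ineq1_le (- dl)); lra).
  assert (Hprod : exp dl * exp (- dl) = 1) by (rewrite <- exp_plus; replace (dl + - dl) with 0 by ring; apply exp_0).
  assert (Hedl : exp dl * (1 - dl) <= 1).
  { pose proof (exp_pos dl). nra. }
  assert (a * (1 - dl) <= b).
  { replace (exp (- c * t) * exp dl * theta 0) with (b * exp dl) in Hmain by (unfold b; ring).
    assert (0 <= 1 - dl) by (assert (b/a>0) by lra; lra).
    pose proof (exp_pos dl). nra. }
  assert (a * dl <= (a - b) / 2).
  { assert (a * (b / a) = b) by (field; lra). nra. }
  nra.
Qed.
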